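(* Let $\mathcal S_1$ and $\mathcal S_2$ be qubit spin substitutions with digit sets $\mathcal D_1,\mathcal D_2$, spin matrices $W_1,W_2$ and spin groups $G_1,G_2$. Let $\mathcal S$ be a qubit spin substitution with spin group $G=G_1\times G_2$ on a digit system $(Q,\mathcal D)$ (in any dimension) with $|\mathcal D|=|\mathcal D_1|\cdot|\mathcal D_2|$, where via a bijection $\mathcal D\to\mathcal D_1\times\mathcal D_2$, $\vec d\mapsto(\vec d_1,\vec d_2)$, the spin matrix is $W(\vec d,\vec d')=(W_1(\vec d_1,\vec d_1'),W_2(\vec d_2,\vec d_2'))$ (i.e. $W=W_1\otimes W_2$). Then: (1) $\mathcal S$ is primitive if and only if $\mathcal S_1$ and $\mathcal S_2$ are both primitive. (2) Let $\chi=\chi_1\otimes\chi_2\in\widehat{G_1\times G_2}$ with $\chi_i\in\widehat{G_i}$. Then $\mathcal S$ is $\chi$-unitary if and only if $\mathcal S_1$ is $\chi_1$-unitary and $\mathcal S_2$ is $\chi_2$-unitary; and $\mathcal S$ is $\chi$-rank-1 if and only if $\mathcal S_1$ is $\chi_1$-rank-1 and $\mathcal S_2$ is $\chi_2$-rank-1.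
   Context: A digit system $(Q,\mathcal D)$: $Q$ an expansive endomorphism of $\mathbb Z^m$, $\mathcal D$ a complete set of coset representatives of $\mathbb Z^m/Q\mathbb Z^m$. A qubit spin substitution given by $(Q,\mathcal D)$, a finite abelian group $G$ and $W:\mathcal D\times\mathcal D\to G$ has alphabet $G\times\mathcal D$ (letters $g\mathsf d$) and rule $\mathcal S(g\mathsf d,\vec d')=(gW(\vec d,\vec d'))\mathsf d'$. It is primitive if its substitution matrix $M_{\mathsf a\mathsf b}=\#\{\vec d:\mathcal S(\mathsf b,\vec d)=\mathsf a\}$ has a power with all entries positive. For $\chi\in\widehat G$, $\chi(W)=(\chi(W(\vec d,\vec d')))_{\vec d,\vec d'}$; $\mathcal S$ is $\chi$-unitary if $\frac{1}{\sqrt{|\mathcal D|}}\chi(W)$ is unitary and $\chi$-rank-1 if $\chi(W)$ has rank 1. $(\chi_1\otimes\chi_2)(g_1,g_2)=\chi_1(g_1)\chi_2(g_2)$. *)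

(* Defs.v *)
From HB Require Import structures.
From mathcomp Require Import all_boot all_order all_algebra all_fingroup all_solvable all_field.
Set Implicit Arguments. Unset Strict Implicit. Unset Printing Implicit Defensive.
Import Order.TTheory GRing.Theory Num.Theory.
Local Open Scope ring_scope.

Definition expansive (m : nat) (Q : 'M[int]_m) : Prop :=
  forall lam : algC, eigenvalue (map_mx intr Q) lam -> 1 < `|lam|.

Definition in_lattice (m : nat) (Q : 'M[int]_m) (v : 'cV[int]_m) : Prop :=
  exists y : 'cV[int]_m, v = Q *m y.

Definition complete_residues (m : nat) (Q : 'M[int]_m) (D : seq 'cV[int]_m) : Prop :=
  uniq D /\
  forall x : 'cV[int]_m, exists! d : 'cV[int]_m, d \in D /\ in_lattice Q (x - d).

Record digit_system := DigitSystem {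
  ds_dim : nat;
  ds_Q : 'M[int]_ds_dim;
  ds_D : seq 'cV[int]_ds_dim;
  ds_expansive : expansive ds_Q;
  ds_complete : complete_residues ds_Q ds_D }.

Definition digit (DS : digit_system) : finType := seq_sub (ds_D DS).

Record qss (G : finGroupType) := QSS {
  qss_ds : digit_system;
  qss_W : digit qss_ds -> digit qss_ds -> G }.

Definition qdigit (G : finGroupType) (S : qss G) : finType := digit (qss_ds S).
Definition letter (G : finGroupType) (S : qss G) : finType := (G * qdigit S)%type.

Definition subst_rule (G : finGroupType) (S : qss G) (a : letter S) (d' : qdigit S)
  : letter S := ((a.1 * qss_W a.2 d')%g, d').

Definition subst_matrix (G : finGroupType) (S : qss G) : 'M[int]_#|letter S| :=
  \matrix_(i, j) (#|[set d' : qdigit S | subst_rule (enum_val j) d' == enum_val i]|%:Z).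

Definition subst_primitive (G : finGroupType) (S : qss G) : Prop :=
  exists k : nat, (0 < k)%N /\ forall i j, 0 < (subst_matrix S ^+ k) i j.

Definition is_character (G : finGroupType) (chi : G -> algC) : Prop :=
  chi 1%g = 1 /\ forall x y : G, chi (x * y)%g = chi x * chi y.

Definition char_tensor (G1 G2 : finGroupType) (chi1 : G1 -> algC) (chi2 : G2 -> algC)
  : (G1 * G2)%type -> algC := fun g => chi1 g.1 * chi2 g.2.

Definition chiW (G : finGroupType) (S : qss G) (chi : G -> algC) : 'M[algC]_#|qdigit S| :=
  \matrix_(i, j) chi (qss_W (enum_val i) (enum_val j)).

Definition is_unitary (n : nat) (U : 'M[algC]_n) : Prop :=
  U *m (map_mx (@Num.conj algC) U)^T = 1%:M.

Definition chi_unitary (G : finGroupType) (S : qss G) (chi : G -> algC) : Prop :=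
  is_unitary ((sqrtC (#|qdigit S|%:R))^-1 *: chiW S chi).

Definition chi_rank1 (G : finGroupType) (S : qss G) (chi : G -> algC) : Prop :=
  \rank (chiW S chi) = 1%N.

(* Main.v *)
Require Import Defs.
From HB Require Import structures.
From mathcomp Require Import all_boot all_order all_algebra all_fingroup all_solvable all_field.
From mathcomp Require Import ring.
Import Order.TTheory GRing.Theory Num.Theory.
Set Implicit Arguments. Unset Strict Implicit. Unset Printing Implicit Defensive.
Local Open Scope ring_scope.

Definition E (G : finGroupType) (S : qss G) (a b : letter S) : int :=
  (((b.1 * qss_W b.2 a.2)%g == a.1) : nat)%:Z.

Definition mat (G : finGroupType) (S : qss G) (k : nat) (a b : letter S) : int :=
  (subst_matrix S ^+ k) (enum_rank a) (enum_rank b).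
Arguments mat {G} S k a b.

Lemma substE (G : finGroupType) (S : qss G) (a b : letter S) :
  subst_matrix S (enum_rank a) (enum_rank b) = E a b.
Proof.
rewrite /subst_matrix /E mxE !enum_rankK; congr (Posz _).
case: a => g d /=.
have [h|h] := eqVneq (b.1 * qss_W b.2 d)%g g.
  transitivity #|[set d]|; last by rewrite cards1.
  apply: eq_card => x; rewrite !inE /subst_rule.
  rewrite xpair_eqE; case: (eqVneq x d) => [->|hx]; first by rewrite h !eqxx.
  by rewrite andbF.
transitivity #|(set0 : {set qdigit S})|; last by rewrite cards0.
apply: eq_card => x; rewrite !inE /subst_rule.
rewrite xpair_eqE; case: (eqVneq x d) => [->|hx]; first by rewrite (negbTE h).
by rewrite andbF.
Qed.

Lemma mat0 (G : finGroupType) (S : qss G) (a b : letter S) :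
  mat S 0 a b = (a == b)%:R.
Proof. by rewrite /mat expr0 mxE (inj_eq enum_rank_inj). Qed.

Lemma matS (G : finGroupType) (S : qss G) k (a b : letter S) :
  mat S k.+1 a b = \sum_c mat S k a c * E c b.
Proof.
rewrite /mat exprSr -mulmxE mxE.
rewrite (reindex (@enum_rank _)); last by apply: onW_bij; exact: enum_rank_bij.
by apply: eq_bigr => c _; rewrite substE.
Qed.

Lemma mat_ge0 (G : finGroupType) (S : qss G) k (a b : letter S) : 0 <= mat S k a b.
Proof.
elim: k a b => [|k IH] a b; first by rewrite mat0.
rewrite matS; apply: sumr_ge0 => c _; apply: mulr_ge0 => //.
Qed.

Lemma mat_mono (G : finGroupType) (S : qss G) k :
  (forall a b : letter S, 0 < mat S k a b) -> forall a b, 0 < mat S k.+1 a b.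
Proof.
move=> H a b; rewrite matS.
pose c : letter S := ((b.1 * qss_W b.2 b.2)%g, b.2).
rewrite (bigD1 c) //=.
have hE : E c b = 1 by rewrite /E eqxx.
rewrite hE mulr1; apply: ltr_wpDr; last exact: H.
apply: sumr_ge0 => x _; apply: mulr_ge0; [exact: mat_ge0|by []].
Qed.

Lemma mat_monoD (G : finGroupType) (S : qss G) k j :
  (forall a b : letter S, 0 < mat S k a b) -> forall a b, 0 < mat S (k + j) a b.
Proof.
move=> H; elim: j => [|j IH]; first by rewrite addn0.
by rewrite addnS; apply: mat_mono.
Qed.

Lemma primP (G : finGroupType) (S : qss G) :
  subst_primitive S <-> exists k, (0 < k)%N /\ forall a b : letter S, 0 < mat S k a b.
Proof.
split=> -[k [hk H]]; exists k; split => //.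
  by move=> a b; apply: H.
by move=> i j; rewrite -(enum_valK i) -(enum_valK j); apply: H.
Qed.

Lemma digit_ex (G : finGroupType) (S : qss G) : exists d : qdigit S, True.
Proof.
have [d [[hd _] _]] := (ds_complete (qss_ds S)).2 0.
by exists (SeqSub hd).
Qed.

Lemma pos_of_mul (x y : int) : 0 <= y -> 0 < x * y -> 0 < x.
Proof.
rewrite le0r => /orP [/eqP->|hy]; first by rewrite mulr0 ltxx.
by rewrite pmulr_lgt0.
Qed.

Section Fact.
Variables (G1 G2 : finGroupType) (S1 : qss G1) (S2 : qss G2) (S : qss (G1 * G2)%type).
Variables (phi : qdigit S -> (qdigit S1 * qdigit S2)%type)
          (phiinv : (qdigit S1 * qdigit S2)%type -> qdigit S).
Hypotheses (phiK : cancel phi phiinv) (phiinvK : cancel phiinv phi).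
Hypothesis hW : forall d d' : qdigit S,
      qss_W d d' = (qss_W (phi d).1 (phi d').1, qss_W (phi d).2 (phi d').2).

Definition l1 (a : letter S) : letter S1 := (a.1.1, (phi a.2).1).
Definition l2 (a : letter S) : letter S2 := (a.1.2, (phi a.2).2).
Definition mk (x : letter S1) (y : letter S2) : letter S :=
  ((x.1, y.1), phiinv (x.2, y.2)).

Lemma l1mk x y : l1 (mk x y) = x.
Proof. by rewrite /l1 /mk /= phiinvK; case: x. Qed.
Lemma l2mk x y : l2 (mk x y) = y.
Proof. by rewrite /l2 /mk /= phiinvK; case: y. Qed.
Lemma mkl a : mk (l1 a) (l2 a) = a.
Proof. by case: a => [[g1 g2] d]; rewrite /mk /l1 /l2 /= -surjective_pairing phiK. Qed.

Lemma sum_letter (F : letter S -> int) :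
  \sum_(c : letter S) F c = \sum_x \sum_y F (mk x y).
Proof.
rewrite pair_big /=.
rewrite (reindex (fun p : (letter S1 * letter S2)%type => mk p.1 p.2)) //.
apply: onW_bij; exists (fun c => (l1 c, l2 c)).
  by case=> x y /=; rewrite l1mk l2mk.
by move=> c /=; rewrite mkl.
Qed.

Lemma E_fact a b : E a b = E (l1 a) (l1 b) * E (l2 a) (l2 b).
Proof.
case: a => [[g1 g2] d]; case: b => [[h1 h2] e].
rewrite /E /l1 /l2 /= hW /=.
rewrite xpair_eqE.
by case: (_ == g1); case: (_ == g2).
Qed.

Lemma eq_letter a b : (a == b) = (l1 a == l1 b) && (l2 a == l2 b).
Proof.
apply/eqP/andP => [->|[/eqP h1 /eqP h2]]; first by rewrite !eqxx.
by rewrite -(mkl a) -(mkl b) h1 h2.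
Qed.

Lemma mat_fact k a b :
  mat S k a b = mat S1 k (l1 a) (l1 b) * mat S2 k (l2 a) (l2 b).
Proof.
elim: k b => [|k IH] b.
  rewrite !mat0 eq_letter.
  by case: (l1 a == l1 b); case: (l2 a == l2 b); rewrite ?mulr0 ?mulr1.
rewrite !matS sum_letter big_distrlr /=.
apply: eq_bigr => x _; apply: eq_bigr => y _.
by rewrite IH E_fact !l1mk !l2mk mulrACA.
Qed.

Lemma prim_fact :
  subst_primitive S <-> subst_primitive S1 /\ subst_primitive S2.
Proof.
split.
  move/primP=> [k [hk H]].
  have [d1 _] := digit_ex S1; have [d2 _] := digit_ex S2.
  split; apply/primP; exists k; split => // x x'.
    pose y : letter S2 := (1%g, d2).
    have := H (mk x y) (mk x' y); rewrite mat_fact !l1mk !l2mk.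
    by apply: pos_of_mul; apply: mat_ge0.
  pose y : letter S1 := (1%g, d1).
  have := H (mk y x) (mk y x'); rewrite mat_fact !l1mk !l2mk mulrC.
  by apply: pos_of_mul; apply: mat_ge0.
case=> [/primP [k1 [h1 H1]] /primP [k2 [h2 H2]]].
apply/primP; exists (k1 + k2)%N; split; first by rewrite addn_gt0 h1.
move=> a b; rewrite mat_fact; apply: mulr_gt0; first exact: mat_monoD.
by rewrite addnC; apply: mat_monoD.
Qed.

End Fact.

Lemma char_expg (G : finGroupType) (chi : G -> algC) (g : G) n :
  is_character chi -> chi (g ^+ n)%g = chi g ^+ n.
Proof.
move=> [h1 hM]; elim: n => [|n IH]; first by rewrite expg0 expr0 h1.
by rewrite expgS hM IH exprS.
Qed.

Lemma char_norm1 (G : finGroupType) (chi : G -> algC) (g : G) :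
  is_character chi -> `|chi g| = 1.
Proof.
move=> hc; apply/eqP; rewrite -(pexpr_eq1 (order_gt0 g)) //.
by rewrite -normrX -char_expg // expg_order hc.1 normr1.
Qed.

Lemma char_neq0 (G : finGroupType) (chi : G -> algC) (g : G) :
  is_character chi -> chi g != 0.
Proof. by move=> hc; rewrite -normr_eq0 char_norm1 // oner_eq0. Qed.

Lemma qcard_gt0 (G : finGroupType) (S : qss G) : (0 < #|qdigit S|)%N.
Proof. by have [d _] := digit_ex S; apply/card_gt0P; exists d. Qed.

Definition fW (G : finGroupType) (S : qss G) (chi : G -> algC) (a b : qdigit S) :=
  chi (qss_W a b).
Arguments fW {G} S chi a b.

Lemma sum_digit (G : finGroupType) (S : qss G) (F : 'I_#|qdigit S| -> algC) :
  \sum_(j < #|qdigit S|) F j = \sum_(b : qdigit S) F (enum_rank b).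
Proof. by rewrite (reindex (@enum_rank _)) //; apply: onW_bij; exact: enum_rank_bij. Qed.

Lemma unitaryP (G : finGroupType) (S : qss G) (chi : G -> algC) :
  chi_unitary S chi <-> forall a c : qdigit S,
    \sum_b fW S chi a b * (fW S chi c b)^* = (a == c)%:R * #|qdigit S|%:R.
Proof.
rewrite /chi_unitary /Defs.is_unitary; set N := #|qdigit S|.
have hN : N%:R != 0 :> algC by rewrite pnatr_eq0 -lt0n qcard_gt0.
set s := sqrtC (N%:R : algC).
have hs : s^-1 * (s^-1)^* = N%:R^-1.
  rewrite geC0_conj ?invr_ge0 ?sqrtC_ge0 ?ler0n //.
  by rewrite -invfM -expr2 sqrtCK.
have key : forall i k,
   ((s^-1 *: chiW S chi) *m (map_mx Num.conj (s^-1 *: chiW S chi))^T) i k =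
   N%:R^-1 * \sum_b fW S chi (enum_val i) b * (fW S chi (enum_val k) b)^*.
  move=> i k; rewrite mxE sum_digit mulr_sumr; apply: eq_bigr => b _.
  rewrite !mxE rmorphM /= !enum_rankK /fW -hs; ring.
split => [hU a c | H].
  move/matrixP: hU => /(_ (enum_rank a) (enum_rank c)).
  rewrite /= key !enum_rankK mxE (inj_eq enum_rank_inj) => h.
  by rewrite -h mulrAC mulVf // mul1r.
apply/matrixP => i k; rewrite key H mxE (inj_eq enum_val_inj).
by rewrite mulrCA mulVf // mulr1.
Qed.

Lemma minors_mul (F : fieldType) n m r (U : 'M[F]_(n, r)) (R : 'M[F]_(r, m)) :
  r = 1%N -> forall i j k l,
  (U *m R) i j * (U *m R) k l = (U *m R) i l * (U *m R) k j.
Proof. move=> hr; subst r => i j k l; rewrite !mxE !big_ord1; ring. Qed.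

Lemma rank1P (F : fieldType) n m (A : 'M[F]_(n, m)) (i0 : 'I_n) (j0 : 'I_m) :
  (forall i j, A i j != 0) ->
  (\rank A = 1%N <-> forall i j k l, A i j * A k l = A i l * A k j).
Proof.
move=> hnz; split => [hr | H].
  have hsub : (A <= row_base A)%MS by rewrite eq_row_base.
  have hA := mulmxKpV hsub.
  move=> i j k l; rewrite -hA; exact: minors_mul.
pose u := \col_i A i j0.
pose v := \row_j (A i0 j / A i0 j0).
have huv : A = u *m v.
  apply/matrixP => i j; rewrite !mxE big_ord1 !mxE.
  by rewrite mulrA -H mulfK.
apply/eqP; rewrite eqn_leq; apply/andP; split.
  rewrite huv; apply: leq_trans (mxrankM_maxr _ _) _; exact: rank_leq_row.
rewrite lt0n mxrank_eq0; apply/eqP => h; have := hnz i0 j0.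
by rewrite h mxE eqxx.
Qed.

Lemma rank1_digits (G : finGroupType) (S : qss G) (chi : G -> algC) :
  is_character chi ->
  (chi_rank1 S chi <-> forall a b c e : qdigit S,
     fW S chi a b * fW S chi c e = fW S chi a e * fW S chi c b).
Proof.
move=> hc; have [d _] := digit_ex S.
have hnz : forall i j, chiW S chi i j != 0 by move=> i j; rewrite mxE char_neq0.
rewrite /chi_rank1 (rank1P (enum_rank d) (enum_rank d) hnz).
split => H.
  move=> a b c e; have := H (enum_rank a) (enum_rank b) (enum_rank c) (enum_rank e).
  by rewrite !mxE !enum_rankK.
by move=> i j k l; rewrite !mxE; apply: H.
Qed.

Lemma T_diag (G : finGroupType) (S : qss G) (chi : G -> algC) (x : qdigit S) :
  is_character chi ->
  \sum_b fW S chi x b * (fW S chi x b)^* = #|qdigit S|%:R.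
Proof.
move=> hc.
under eq_bigr => b _ do rewrite -normCK /fW char_norm1 // expr1n.
by rewrite sumr_const.
Qed.

Section Fact2.
Variables (G1 G2 : finGroupType) (S1 : qss G1) (S2 : qss G2) (S : qss (G1 * G2)%type).
Variables (phi : qdigit S -> (qdigit S1 * qdigit S2)%type)
          (phiinv : (qdigit S1 * qdigit S2)%type -> qdigit S).
Hypotheses (phiK : cancel phi phiinv) (phiinvK : cancel phiinv phi).
Hypothesis hW : forall d d' : qdigit S,
      qss_W d d' = (qss_W (phi d).1 (phi d').1, qss_W (phi d).2 (phi d').2).
Hypothesis hcard : #|qdigit S| = (#|qdigit S1| * #|qdigit S2|)%N.
Variables (chi1 : G1 -> algC) (chi2 : G2 -> algC).
Hypotheses (hc1 : is_character chi1) (hc2 : is_character chi2).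

Let chi := char_tensor chi1 chi2.

Lemma fW_mk p q : fW S chi (phiinv p) (phiinv q) = fW S1 chi1 p.1 q.1 * fW S2 chi2 p.2 q.2.
Proof. by rewrite /fW /chi /char_tensor hW !phiinvK. Qed.

Lemma sum_digitS (F : qdigit S -> algC) :
  \sum_b F b = \sum_x \sum_y F (phiinv (x, y)).
Proof.
rewrite pair_big /= (reindex phiinv); last by apply: onW_bij; exists phi.
by apply: eq_bigr => -[x y].
Qed.

Lemma T_fact p q :
  \sum_b fW S chi (phiinv p) b * (fW S chi (phiinv q) b)^* =
  (\sum_b fW S1 chi1 p.1 b * (fW S1 chi1 q.1 b)^*) *
  (\sum_b fW S2 chi2 p.2 b * (fW S2 chi2 q.2 b)^*).
Proof.
rewrite sum_digitS big_distrlr /=; apply: eq_bigr => x _; apply: eq_bigr => y _.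
by rewrite !fW_mk /= rmorphM /= mulrACA.
Qed.

Lemma unitary_fact :
  chi_unitary S chi <-> chi_unitary S1 chi1 /\ chi_unitary S2 chi2.
Proof.
have [d1 _] := digit_ex S1; have [d2 _] := digit_ex S2.
have hinj : injective phiinv by exact: can_inj phiinvK.
have hn1 : #|qdigit S1|%:R != 0 :> algC by rewrite pnatr_eq0 -lt0n qcard_gt0.
have hn2 : #|qdigit S2|%:R != 0 :> algC by rewrite pnatr_eq0 -lt0n qcard_gt0.
split.
  move/unitaryP => H; split; apply/unitaryP => a c.
    have := H (phiinv (a, d2)) (phiinv (c, d2)).
    rewrite T_fact /= T_diag // (inj_eq hinj) xpair_eqE eqxx andbT hcard natrM mulrA.
    exact: (mulIf hn2).
  have := H (phiinv (d1, a)) (phiinv (d1, c)).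
  rewrite T_fact /= T_diag // (inj_eq hinj) xpair_eqE eqxx /= hcard natrM mulrCA.
  exact: (mulfI hn1).
case=> /unitaryP H1 /unitaryP H2; apply/unitaryP => a c.
rewrite -(phiK a) -(phiK c) T_fact H1 H2 (inj_eq hinj) hcard natrM.
case: (phi a) => a1 a2; case: (phi c) => c1 c2 /=.
rewrite xpair_eqE.
case: (a1 =P c1) => _; case: (a2 =P c2) => _; rewrite /= ?mul0r ?mul1r ?mulr0. all: by [].
Qed.

Lemma rank1_fact :
  chi_rank1 S chi <-> chi_rank1 S1 chi1 /\ chi_rank1 S2 chi2.
Proof.
have hc : is_character chi.
  split; first by rewrite /chi /char_tensor /= hc1.1 hc2.1 mulr1.
  by move=> x y; rewrite /chi /char_tensor /= hc1.2 hc2.2 mulrACA.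
have [d1 _] := digit_ex S1; have [d2 _] := digit_ex S2.
split.
  move/(rank1_digits _ hc) => H; split; apply/(rank1_digits _ _) => // a b c e.
    have := H (phiinv (a, d2)) (phiinv (b, d2)) (phiinv (c, d2)) (phiinv (e, d2)).
    rewrite !fW_mk /= mulrACA [X in _ = X]mulrACA; apply: mulIf.
    by rewrite mulf_neq0 // /fW char_neq0.
  have := H (phiinv (d1, a)) (phiinv (d1, b)) (phiinv (d1, c)) (phiinv (d1, e)).
  rewrite !fW_mk /= mulrACA [X in _ = X]mulrACA; apply: mulfI.
  by rewrite mulf_neq0 // /fW char_neq0.
case=> /(rank1_digits _ hc1) H1 /(rank1_digits _ hc2) H2.
apply/(rank1_digits _ hc) => a b c e.
rewrite -(phiK a) -(phiK b) -(phiK c) -(phiK e) !fW_mk.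
by rewrite mulrACA H1 H2 mulrACA.
Qed.

End Fact2.

Unset Implicit Arguments.

Theorem proposition5p3 (G1 G2 : finGroupType)
  (hG1 : abelian [set: G1]) (hG2 : abelian [set: G2])
  (S1 : qss G1) (S2 : qss G2) (S : qss (G1 * G2)%type)
  (phi : qdigit S -> (qdigit S1 * qdigit S2)%type) (phi_bij : bijective phi)
  (hcard : #|qdigit S| = (#|qdigit S1| * #|qdigit S2|)%N)
  (hW : forall d d' : qdigit S,
      qss_W d d' = (qss_W (phi d).1 (phi d').1, qss_W (phi d).2 (phi d').2)) :
  (subst_primitive S <-> subst_primitive S1 /\ subst_primitive S2) /\
  (forall (chi1 : G1 -> algC) (chi2 : G2 -> algC),
      is_character chi1 -> is_character chi2 ->
      (chi_unitary S (char_tensor chi1 chi2) <-> chi_unitary S1 chi1 /\ chi_unitary S2 chi2) /\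
      (chi_rank1 S (char_tensor chi1 chi2) <-> chi_rank1 S1 chi1 /\ chi_rank1 S2 chi2)).
Proof.
have [phiinv phiK phiinvK] := phi_bij.
split; first exact: (prim_fact phiK phiinvK hW).
move=> chi1 chi2 hc1 hc2; split.
  exact: (unitary_fact phiK phiinvK hW hcard hc1 hc2).
exact: (rank1_fact phiK phiinvK hW hc1 hc2).
Qed.
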